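(* For all $m\geq 2$: $s_{1,m}(122,213)=1$, $s_{2,m}(122,213)=m+1$, and for all $n\geq 3$, \[ s_{n,m}(122,213)=m\,s_{n-1,m}(122,213)+s_{n-2,m}(122,213). \]
   Context: $[n]_m=\{1^m,\ldots,n^m\}$; a permutation of $[n]_m$ is a sequence of length $nm$ in which each element of $[n]$ appears exactly $m$ times. A sequence avoids a pattern $\pi$ if it has no subsequence order-isomorphic to $\pi$ (same relative order and same equalities among entries). $s_{n,m}(\Pi)$ is the number of permutations of $[n]_m$ avoiding all patterns in $\Pi$. *)

(* Defs.v *)
From mathcomp Require Import all_boot.
Set Implicit Arguments. Unset Strict Implicit. Unset Printing Implicit Defensive.

Definition order_iso (s p : seq nat) : bool :=
  (size s == size p) &&
  [forall i : 'I_(size s), forall j : 'I_(size s),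
     ((nth 0 s i < nth 0 s j) == (nth 0 p i < nth 0 p j)) &&
     ((nth 0 s i == nth 0 s j) == (nth 0 p i == nth 0 p j))].

Definition contains (s p : seq nat) : bool :=
  [exists msk : (size s).-tuple bool, order_iso (mask msk s) p].

Definition avoids (s p : seq nat) : bool := ~~ contains s p.

(* Permutations of the multiset [n]_m = {1^m,...,n^m}, represented with
   letters 0..n-1 (i.e. letter k stands for k+1; avoidance is invariant
   under this shift): words of length n*m over 'I_n in which each letter
   occurs exactly m times. *)
Definition is_multiperm (n m : nat) (w : (n * m).-tuple 'I_n) : bool :=
  [forall k : 'I_n, count_mem k w == m].

Definition s_nm (n m : nat) (Pi : seq (seq nat)) : nat :=
  #|[set w : (n * m).-tuple 'I_n |
       is_multiperm w && all (fun p => avoids (map (@nat_of_ord n) w) p) Pi]|.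

Definition Pi_122_213 : seq (seq nat) := [:: [:: 1; 2; 2]; [:: 2; 1; 3]].

(* Main.v *)
Require Import Defs.
From mathcomp Require Import all_boot zify.
From Stdlib Require Import Lia.
Unset Implicit Arguments.

Definition Av (s : seq nat) := forall a b c, subseq [:: a; b; c] s ->
  ~~ ((a < b) && (b == c)) && ~~ ((b < a) && (a < c)).


Lemma forall3 (P : pred 'I_3) : [forall i, P i] = [&& P ord0, P (inord 1) & P (inord 2)].
Proof.
apply/forallP/and3P => [H|[H0 H1 H2] i]; first by split; apply: H.
case: i => [[|[|[|i]]] Hi].
- by rewrite (_ : Ordinal Hi = ord0) //; apply: val_inj.
- by rewrite (_ : Ordinal Hi = inord 1) //; apply: val_inj; rewrite /= inordK.
- by rewrite (_ : Ordinal Hi = inord 2) //; apply: val_inj; rewrite /= inordK.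
- by [].
Qed.

Lemma iso122 a b c : order_iso [:: a; b; c] [:: 1; 2; 2] = (a < b) && (b == c).
Proof.
rewrite /order_iso /= forall3 !forall3 /= !inordK //=.
by case: (ltngtP a b); case: (ltngtP b c); case: (ltngtP a c) => //; lia.
Qed.

Lemma iso213 a b c : order_iso [:: a; b; c] [:: 2; 1; 3] = (b < a) && (a < c).
Proof.
rewrite /order_iso /= forall3 !forall3 /= !inordK //=.
by case: (ltngtP a b); case: (ltngtP b c); case: (ltngtP a c) => //; lia.
Qed.

Lemma containsP s p : reflect (exists t, subseq t s && order_iso t p) (contains s p).
Proof.
apply: (iffP existsP) => [[msk H]|[t /andP[/subseqP[msk Hs ->] H]]].
  by exists (mask msk s); rewrite H mask_subseq.
have Hs' : size msk == size s by apply/eqP.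
by exists (Tuple Hs').
Qed.

Lemma size3 (t : seq nat) p : size p = 3 -> order_iso t p -> exists a b c, t = [:: a; b; c].
Proof.
move=> Hp /andP[/eqP Ht _]; move: Ht; rewrite Hp.
by case: t => [|a [|b [|c [|]]]] //= _; exists a, b, c.
Qed.

Lemma AvE s : all (fun p => avoids s p) Pi_122_213 <-> Av s.
Proof.
rewrite /= andbT /avoids; split.
  move=> /andP[H1 H2] a b c Hs; apply/andP; split.
    by apply: contra H1 => H; apply/containsP; exists [:: a; b; c]; rewrite Hs iso122.
  by apply: contra H2 => H; apply/containsP; exists [:: a; b; c]; rewrite Hs iso213.
move=> H; apply/andP; split; apply/negP => /containsP [t /andP[Hs Hi]].
  have [a [b [c Ht]]] := @size3 t [:: 1;2;2] (erefl 3) Hi; subst t.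
  by move: (H _ _ _ Hs); rewrite -iso122 Hi.
have [a [b [c Ht]]] := @size3 t [:: 2;1;3] (erefl 3) Hi; subst t.
by move: (H _ _ _ Hs); rewrite -iso213 Hi andbF.
Qed.

Lemma Av_sub s t : subseq s t -> Av t -> Av s.
Proof. by move=> Hst H a b c Hs; apply: H; apply: subseq_trans Hst. Qed.

Lemma skip_nseq (a K : nat) l n v : a != K ->
  subseq (a :: l) (nseq n K ++ v) -> subseq (a :: l) v.
Proof. by move=> HaK; elim: n => //= n IH; rewrite (negbTE HaK). Qed.

Lemma skip_pre (K : nat) l v w : K \notin v ->
  subseq (K :: l) (v ++ K :: w) -> subseq l w.
Proof.
elim: v => [|y v IH] /=; first by rewrite eqxx.
rewrite in_cons negb_or => /andP[HKy HKv].
case: ifP => [/eqP E|_]; first by rewrite E eqxx in HKy.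
exact: IH.
Qed.

Lemma no_inv_sorted (t : seq nat) :
  (forall a b, subseq [:: a; b] t -> a <= b) -> sorted leq t.
Proof.
elim: t => [|x t IH] //= H.
rewrite (path_sortedE leq_trans); apply/andP; split.
  apply/allP => y Hy; apply: H => /=; rewrite eqxx sub1seq //.
apply: IH => a b Hab; apply: H; apply: subseq_trans Hab (subseq_cons _ _).
Qed.

Lemma sorted_pair (t : seq nat) a b : sorted leq t -> subseq [:: a; b] t -> a <= b.
Proof.
move=> Ht Hs; have := subseq_sorted leq_trans Hs Ht; by rewrite /= andbT.
Qed.

Lemma not_sorted_cat (x y : seq nat) a b : a \in x -> b \in y -> b < a ->
  ~~ sorted leq (x ++ y).
Proof.
move=> Ha Hb Hba; apply/negP => Hs.
have Hsub : subseq [:: a; b] (x ++ y).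
  by rewrite (_ : [:: a; b] = [:: a] ++ [:: b]) //; apply: cat_subseq; rewrite sub1seq.
by have := sorted_pair _ a b Hs Hsub; rewrite leqNgt Hba.
Qed.

Lemma sorted_nseq n (x : nat) : sorted leq (nseq n x).
Proof. by elim: n => [|[|n] IH] //=; rewrite leqnn. Qed.

Lemma count2_sub (K : nat) s : 1 < count_mem K s -> subseq [:: K; K] s.
Proof.
elim: s => [|y s IH] //=.
case: (eqVneq y K) => [Ey|HyK].
  subst y; rewrite add1n ltnS => H.
  by rewrite sub1seq -has_pred1 has_count.
rewrite add0n => /IH H.
exact: H.
Qed.

Lemma prefixK (K c : nat) s : all (fun x => x <= K) s -> Av s ->
  count_mem K s = c.+1 -> take c s = nseq c K.
Proof.
elim: s c => [|x s IH] c //= /andP[HxK Hall] HAv Hc.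
case: c Hc => [|c] Hc //=.
have HAv' : Av s := Av_sub _ _ (subseq_cons s x) HAv.
case: (eqVneq x K) Hc => [Ex|HxK'] Hc /=.
  subst x; rewrite (IH c Hall HAv') //.
  by move: Hc; rewrite add1n; case.
exfalso.
move: Hc; rewrite add0n => Hc.
have HKK : subseq [:: K; K] s.
  by apply: count2_sub; rewrite Hc.
have := HAv x K K; rewrite /= eqxx HKK.
have -> : x < K by rewrite ltn_neqAle HxK' HxK.
by rewrite eqxx => /(_ isT).
Qed.

Definition ins (K m : nat) (u : seq nat) (p : nat) :=
  nseq m.-1 K ++ take p u ++ K :: drop p u.
Definition Ps (u : seq nat) := [seq p <- iota 0 (size u).+1 | sorted leq (take p u)].
Fixpoint G (m k : nat) : seq (seq nat) :=
  if k is k'.+1 then [seq ins k m u p | u <- G m k', p <- Ps u] else [:: nseq m 0].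

Definition goodP m k s := all (fun x => x <= k) s /\
  (forall j, j <= k -> count_mem j s = m) /\ Av s.

Lemma filter_ins K m u p : K \notin u -> filter (predC1 K) (ins K m u p) = u.
Proof.
move=> HK; rewrite /ins !filter_cat filter_nseq /= eqxx /= -filter_cat cat_take_drop.
apply/all_filterP; apply/allP => x Hx /=; apply: contraNneq HK => <-; exact: Hx.
Qed.

Lemma count_ins K m u p j :
  count_mem j (ins K m u p) = (K == j) * m.-1 + (K == j) + count_mem j u.
Proof.
rewrite /ins count_cat count_nseq count_cat /=.
rewrite -[u in RHS](cat_take_drop p) count_cat eq_sym; lia.
Qed.

Lemma size_ins K m u p : size (ins K m u p) = m.-1 + (size u).+1.
Proof.
rewrite /ins size_cat size_nseq size_cat /=.
by rewrite -[u in RHS](cat_take_drop p) size_cat addnS.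
Qed.

Lemma size_G m k s : 0 < m -> s \in G m k -> size s = k.+1 * m.
Proof.
move=> Hm; elim: k s => [|k IH] s /=.
  by rewrite inE => /eqP ->; rewrite size_nseq mul1n.
case/allpairsPdep => u [p [Hu _ ->]].
rewrite size_ins (IH _ Hu); lia.
Qed.

Lemma mem_Ps u p : p \in Ps u = (p <= size u) && sorted leq (take p u).
Proof. by rewrite mem_filter mem_iota add0n ltnS andbC. Qed.

Lemma charG0 m s : goodP m 0 s <-> s \in G m 0.
Proof.
rewrite /= inE; split.
  move=> [Hall [Hcnt _]].
  have Hs : all (pred1 0) s.
    by apply: sub_all Hall => x /=; rewrite leqn0.
  move/all_pred1P: Hs => Hs.
  have Hc : count_mem 0 s = size s by rewrite {1}Hs count_nseq /= mul1n.
  by rewrite -(Hcnt 0 (leqnn 0)) Hc {1}Hs.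
move/eqP => ->; split; first by rewrite all_nseq orbT.
split; first by move=> j; rewrite leqn0 => /eqP ->; rewrite count_nseq /= mul1n.
move=> a b c Hs.
have H x : x \in [:: a; b; c] -> x = 0.
  by move=> /(mem_subseq Hs); rewrite mem_nseq => /andP[_ /eqP].
have -> : a = 0 by apply: H; rewrite inE eqxx.
have -> : b = 0 by apply: H; rewrite !inE eqxx orbT.
by [].
Qed.

Lemma all_ins k m u p : all (fun x => x <= k) u ->
  all (fun x => x <= k.+1) (ins k.+1 m u p).
Proof.
move=> Hall; apply/allP => x; rewrite !mem_cat mem_nseq in_cons.
case/orP => [/andP[_ /eqP ->] //|]; case/orP => [/mem_take|].
  by move=> /(allP Hall) /leqW.
case/orP => [/eqP -> //|/mem_drop]; by move=> /(allP Hall) /leqW.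
Qed.

Lemma charG_fwd m k s : 1 < m -> (forall s, goodP m k s <-> s \in G m k) ->
  goodP m k.+1 s -> s \in G m k.+1.
Proof.
move=> Hm IH [Hall [Hcnt HAv]].
set K := k.+1.
have HcK : count_mem K s = m.-1.+1 by rewrite prednK ?Hcnt //; lia.
have Hpre := prefixK K m.-1 s Hall HAv HcK.
set t := drop m.-1 s.
have Es : s = nseq m.-1 K ++ t by rewrite -Hpre cat_take_drop.
have Hct : count_mem K t = 1.
  by move: HcK; rewrite {1}Es count_cat count_nseq /= eqxx mul1n; lia.
have HKt : K \in t by rewrite -has_pred1 has_count Hct.
have [t1 [t2 Et]] : exists t1 t2, t = t1 ++ K :: t2.
  by case/splitPr: HKt => t1 t2; exists t1, t2.
have E1 : count_mem K [:: K] = 1 by rewrite /= eqxx.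
move: Hct; rewrite Et count_cat -cat1s count_cat E1 => Hct.
have HK1 : K \notin t1 by apply/count_memPn; lia.
have HK2 : K \notin t2 by apply/count_memPn; lia.
set u := t1 ++ t2.
have Hf1 : filter (predC1 K) t1 = t1.
  by apply/all_filterP; apply/allP => x Hx /=; apply: contraNneq HK1 => <-.
have Hf2 : filter (predC1 K) t2 = t2.
  by apply/all_filterP; apply/allP => x Hx /=; apply: contraNneq HK2 => <-.
have Hu : filter (predC1 K) s = u.
  by rewrite Es Et !filter_cat filter_nseq /= eqxx /= Hf1 Hf2.
have Hgu : goodP m k u.
  split.
    apply/allP => x; rewrite -Hu mem_filter => /andP[HxK Hx].
    have := allP Hall x Hx; rewrite leq_eqVlt (negbTE HxK) /=.
    by [].
  split.
    move=> j Hj; rewrite -Hu count_filter -(Hcnt j (leqW Hj)).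
    apply: eq_count => x /=.
    case: (eqVneq x j) => [->|] //=.
    by apply/eqP => E; rewrite E ltnn in Hj.
  by apply: Av_sub _ _ _ HAv; rewrite -Hu filter_subseq.
have Hsu : s = ins K m u (size t1).
  by rewrite /ins Es Et take_size_cat // drop_size_cat.
rewrite Hsu; apply: allpairs_f_dep; first by apply/IH.
rewrite mem_Ps take_size_cat // size_cat leq_addr /=.
apply: no_inv_sorted => a b Hab; rewrite leqNgt; apply/negP => Hba.
have Ha1 : a \in t1 by apply: (mem_subseq Hab); rewrite inE eqxx.
have Has : a \in s by rewrite Es Et !mem_cat Ha1 orbT.
have HaK : a < K.
  rewrite ltn_neqAle (allP Hall a Has) andbT.
  by apply: contraNneq HK1 => <-.
have Hsub : subseq [:: a; b; K] s.
  rewrite Es Et; apply: subseq_trans (suffix_subseq (nseq _ _) _).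
  rewrite -[ [:: a; b; K] ]/([:: a; b] ++ [:: K]); apply: cat_subseq => //.
  by rewrite sub1seq mem_head.
by have := HAv a b K Hsub; rewrite Hba HaK andbF.
Qed.

Lemma charG_bwd m k s : 1 < m -> (forall s, goodP m k s <-> s \in G m k) ->
  s \in G m k.+1 -> goodP m k.+1 s.
Proof.
move=> Hm IH /allpairsPdep [u [p [Hu Hp ->]]].
have [Hall [Hcnt HAv]] := (IH u).2 Hu.
set K := k.+1.
have HKu : K \notin u by apply/negP => /(allP Hall); rewrite ltnn.
move: Hp; rewrite mem_Ps => /andP[Hpu Hsort].
have HallS := all_ins k m u p Hall.
split; first exact: HallS.
split.
  move=> j Hj; rewrite count_ins.
  case: (eqVneq K j) => [<-|HKj].
    rewrite (count_memPn HKu) mul1n addn0 /=; lia.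
  rewrite mul0n !add0n; apply: Hcnt.
  by move: Hj HKj; rewrite /K => Hj /eqP HKj; lia.
have Hfil := filter_ins K m u p HKu.
have Hno a b c : a != K -> b != K -> c != K -> subseq [:: a; b; c] (ins K m u p) ->
    ~~ ((a < b) && (b == c)) && ~~ ((b < a) && (a < c)).
  move=> Ha Hb Hc Hs; apply: HAv; rewrite -Hfil subseq_filter Hs /= Ha Hb Hc.
  by [].
move=> a b c Hs.
have Hle x : x \in [:: a; b; c] -> x <= K by move=> /(mem_subseq Hs) /(allP HallS).
have HaK := Hle a (mem_head _ _).
have HbK : b <= K by apply: Hle; rewrite !inE eqxx orbT.
have HcK : c <= K by apply: Hle; rewrite !inE eqxx !orbT.
set v := take p u ++ K :: drop p u.
have Hcv : count_mem K v = 1.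
  have E1 : count_mem K [:: K] = 1 by rewrite /= eqxx.
  rewrite /v -cat1s !count_cat E1.
  rewrite (count_memPn (contra (@mem_take _ _ _ _) HKu)).
  by rewrite (count_memPn (contra (@mem_drop _ _ _ _) HKu)).
apply/andP; split; apply/negP.
  move=> /andP[Hab /eqP Hbc]; subst c.
  have HaK' : a != K by rewrite neq_ltn (leq_trans Hab HbK).
  case: (eqVneq b K) => [Eb|HbK'].
    subst b.
    have H1 : subseq [:: a; K; K] v by apply: skip_nseq HaK' Hs.
    have H2 : subseq [:: K; K] v by apply: cons_subseq H1.
    have := leq_count_subseq (pred1 K) H2; rewrite Hcv /= eqxx.
    by [].
  by move: (Hno a b b HaK' HbK' HbK' Hs); rewrite Hab eqxx.
move=> /andP[Hba Hac].
have HaK' : a != K by rewrite neq_ltn (leq_trans Hac HcK).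
have HbK' : b != K by rewrite neq_ltn (leq_trans Hba (ltnW (leq_trans Hac HcK))).
case: (eqVneq c K) => [Ec|HcK'].
  subst c.
  have H1 : subseq [:: a; b; K] v by apply: skip_nseq HaK' Hs.
  have Erv : rev v = rev (drop p u) ++ K :: rev (take p u).
    by rewrite /v rev_cat rev_cons cat_rcons.
  have H2 : subseq [:: K; b; a] (rev v).
    by rewrite (_ : [:: K; b; a] = rev [:: a; b; K]) // subseq_rev.
  rewrite Erv in H2.
  have H3 : subseq [:: b; a] (rev (take p u)).
    apply: skip_pre H2; rewrite mem_rev; exact: (contra (@mem_drop _ _ _ _) HKu).
  have H4 : subseq [:: a; b] (take p u).
    by rewrite -subseq_rev (_ : rev [:: a; b] = [:: b; a]).
  by have := sorted_pair _ a b Hsort H4; rewrite leqNgt Hba.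
by move: (Hno a b c HaK' HbK' HcK' Hs); rewrite Hba Hac andbF.
Qed.

Lemma charG m k s : 1 < m -> goodP m k s <-> s \in G m k.
Proof.
move=> Hm; elim: k s => [|k IH] s; first exact: charG0.
split; [exact: charG_fwd | exact: charG_bwd].
Qed.

Lemma notin_G m k u : 1 < m -> u \in G m k -> k.+1 \notin u.
Proof.
move=> Hm /(charG m k u Hm) [Hall _].
by apply/negP => /(allP Hall); rewrite ltnn.
Qed.

Lemma ins_inj K m u p u' p' : K \notin u -> K \notin u' -> p <= size u -> p' <= size u' ->
  ins K m u p = ins K m u' p' -> u = u' /\ p = p'.
Proof.
move=> HK HK' Hp Hp' E.
have Eu : u = u' by rewrite -(filter_ins K m u p HK) E filter_ins.
subst u'; split => //.
have E2 : take p u ++ K :: drop p u = take p' u ++ K :: drop p' u.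
  by move: E; rewrite /ins => /(congr1 (drop m.-1)); rewrite !drop_size_cat ?size_nseq.
have := congr1 (index K) E2.
rewrite !index_cat (negbTE (contra (@mem_take _ _ _ _) HK)) (negbTE (contra (@mem_take _ _ _ _) HK)).
by rewrite /= eqxx !addn0 !size_takel.
Qed.

Lemma uniq_G m k : 1 < m -> uniq (G m k).
Proof.
move=> Hm; elim: k => [|k IH] //=.
apply: allpairs_uniq_dep => //.
  by move=> u _; apply: filter_uniq; apply: iota_uniq.
move=> x y /allpairsPdep [u [p [Hu Hp ->]]] /allpairsPdep [u' [p' [Hu' Hp' ->]]] /= E.
move: Hp Hp'; rewrite !mem_Ps => /andP[Hp _] /andP[Hp' _].
have [Eu Ep] := ins_inj _ _ _ _ _ _ (notin_G _ _ _ Hm Hu) (notin_G _ _ _ Hm Hu') Hp Hp' E.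
by subst.
Qed.

Lemma size_Ps_ins m k v p : 1 < m -> v \in G m k -> p \in Ps v ->
  size (Ps (ins k.+1 m v p)) = m + (p == 0).
Proof.
move=> Hm Hv Hp.
have Hsz := size_G m k v (ltnW Hm) Hv.
have [Hall _] := (charG m k v Hm).2 Hv.
set K := k.+1.
case Ev : v Hsz Hall Hp => [|h v'] Hsz Hall Hp; first by move: Hsz; rewrite /=; lia.
have HhK : h < K by move: Hall => /= /andP[].
rewrite -Ev.
set w := take p v ++ K :: drop p v.
set u := ins K m v p.
have Htq q : m.-1 <= q -> take q u = nseq m.-1 K ++ take (q - m.-1) w.
  by move=> Hq; rewrite /u /ins take_cat size_nseq ltnNge Hq.
have HKn : K \in nseq m.-1 K by rewrite mem_nseq eqxx andbT; lia.
rewrite /Ps size_filter size_ins.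
have -> : (m.-1 + (size v).+1).+1 = m + (size v).+1 by lia.
rewrite iotaD add0n /= count_cat /=.
have -> : count (fun q => sorted leq (take q u)) (iota 0 m) = m.
  rewrite -[RHS](size_iota 0 m) -count_predT; apply: eq_in_count => q.
  rewrite mem_iota add0n /= => Hq.
  case: (ltnP q m.-1) => Hq'.
    by rewrite /u /ins take_cat size_nseq Hq' take_nseq ?sorted_nseq // ltnW.
  rewrite Htq // (_ : q - m.-1 = 0) ?take0 ?cats0 ?sorted_nseq //; lia.
have -> : count (fun q => sorted leq (take q u)) (iota m.+1 (size v)) = 0.
  rewrite -[RHS](count_pred0 (iota m.+1 (size v))); apply: eq_in_count => q.
  rewrite mem_iota => /andP[Hq _] /=.
  apply/negbTE; rewrite Htq; last by lia.
  apply: (not_sorted_cat _ _ K h HKn _ HhK).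
  have [j Ej] : exists j, q - m.-1 = j.+2 by exists (q - m.-1).-2; lia.
  rewrite Ej /w Ev; clear Htq u w; case: p Hp => [|p] _ /=; by rewrite !inE eqxx ?orbT.
rewrite Htq; last by lia.
rewrite (_ : m - m.-1 = 1); last by lia.
rewrite /w; clear Htq u w; case: p Hp => [|p] _ /=.
  rewrite take0 drop0 /= take0 (_ : [:: K] = nseq 1 K) // -nseqD sorted_nseq /=; lia.
rewrite Ev /= take0 !addn0.
have -> : sorted leq (nseq m.-1 K ++ [:: h]) = false.
  by apply/negbTE; apply: (not_sorted_cat _ _ K h HKn _ HhK); rewrite mem_head.
by rewrite addn0.
Qed.

Lemma size_G_sum m k : size (G m k.+1) = \sum_(u <- G m k) size (Ps u).
Proof. by rewrite /= size_allpairs_dep sumnE big_map. Qed.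

Lemma sum_eq0 v : \sum_(p <- Ps v) (p == 0 : nat) = 1.
Proof.
rewrite /Ps /= take0 /= big_cons /= big1_seq //.
move=> p /andP[_]; rewrite mem_filter mem_iota => /andP[_ /andP[Hp _]].
by case: p Hp.
Qed.

Lemma size_G1 m : size (G m 1) = m.+1.
Proof.
rewrite size_G_sum /= big_cons big_nil addn0 /Ps size_filter.
rewrite size_nseq -[RHS](size_iota 0 m.+1) -count_predT; apply: eq_in_count => q.
by rewrite mem_iota add0n ltnS /= => Hq; rewrite take_nseq // sorted_nseq.
Qed.

Lemma recG m k : 1 < m -> size (G m k.+2) = m * size (G m k.+1) + size (G m k).
Proof.
move=> Hm.
rewrite size_G_sum.
have -> : G m k.+1 = [seq ins k.+1 m u p | u <- G m k, p <- Ps u] by [].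
rewrite big_allpairs_dep.
rewrite (eq_big_seq (fun v => size (Ps v) * m + 1)); last first.
  move=> v Hv.
  rewrite (eq_big_seq (fun p => m + (p == 0 : nat))); last first.
    by move=> p Hp; apply: size_Ps_ins.
  rewrite big_split /= sum_eq0 -sum1_size big_distrl /=.
  by congr (_ + _); apply: eq_bigr => p _; rewrite mul1n.
rewrite big_split /= sum1_size -big_distrl /= -size_G_sum mulnC.
by [].
Qed.

Lemma count_val n (w : seq 'I_n) (o : 'I_n) :
  count_mem o w = count_mem (val o) (map val w).
Proof. by rewrite count_map; apply: eq_count => x /=; rewrite -(inj_eq val_inj). Qed.

Lemma bridge m k : 1 < m -> s_nm k.+1 m Pi_122_213 = size (G m k).
Proof.
move=> Hm.
rewrite /s_nm cardE.
set A := [set w | _].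
set f := fun w : (k.+1 * m).-tuple 'I_k.+1 => map val (tval w).
rewrite -(size_map f).
apply: perm_size; apply: uniq_perm.
- rewrite map_inj_uniq ?enum_uniq //.
  by move=> w1 w2 /(inj_map val_inj) /val_inj.
- exact: uniq_G.
move=> s; apply/mapP/idP.
  move=> [w]; rewrite mem_enum inE => /andP[Hmp Hav] ->.
  apply/(charG m k _ Hm); split.
    by apply/allP => x /mapP [i _ ->]; rewrite -ltnS ltn_ord.
  split; last by apply/AvE.
  move=> j Hj; have Hj' : j < k.+1 by rewrite ltnS.
  have := forallP Hmp (Ordinal Hj'); rewrite count_val => /eqP.
  by [].
move=> Hs.
have [Hall [Hcnt HAv]] := (charG m k s Hm).2 Hs.
have Hsz := size_G m k s (ltnW Hm) Hs.
have Hsz' : size (map (@inord k) s) == k.+1 * m by rewrite size_map Hsz.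
set t := Tuple Hsz'.
have Ht : f t = s.
  rewrite /f /= -map_comp; apply: map_id_in => x Hx /=.
  by rewrite inordK // ltnS (allP Hall x Hx).
exists t => //.
rewrite mem_enum inE; apply/andP; split.
  by apply/forallP => o; rewrite count_val -/(f t) Ht Hcnt // -ltnS ltn_ord.
by apply/AvE; rewrite -/(f t) Ht.
Qed.

Theorem theorem6 :
  forall m : nat, 2 <= m ->
    s_nm 1 m Pi_122_213 = 1 /\
    s_nm 2 m Pi_122_213 = m + 1 /\
    (forall n : nat, 3 <= n ->
       s_nm n m Pi_122_213 =
         m * s_nm n.-1 m Pi_122_213 + s_nm n.-2 m Pi_122_213).
Proof.
move=> m Hm; split; first by rewrite bridge.
split; first by rewrite bridge // size_G1 addn1.
case=> [|[|[|k]]] // _.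
by rewrite /= !bridge // recG.
Qed.
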